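(* Let $A\in\mathbb{Z}^{d\times n}$ have rank $d$, and let $B^{(0)}$ be the nonsingular matrix chosen in step 1 of the Basic Generalized Euclidean Algorithm. Each exchange step (the ''otherwise'' branch) replaces the current basis matrix $B$ by a matrix $B'$ with $|\det B'|\le \tfrac12|\det B|$. Consequently the algorithm performs at most $\log_2|\det B^{(0)}|$ exchange steps.
   Context: For real $y$, $\lfloor y\rceil:=\lfloor y+1/2\rfloor$. Basic Generalized Euclidean Algorithm. Input: $A=(A_1,\dots,A_n)\in\mathbb{Z}^{d\times n}$ of rank $d$. 1. Choose $d$ linearly independent columns of $A$ and let $B=(B_1,\dots,B_d)$ be the matrix they form. Let $C$ be the multiset of the remaining $n-d$ columns. 2. While $C\neq\emptyset$: - choose any $c\in C$ and compute $x\in\mathbb{Q}^d$ with $Bx=c$; - if $x\in\mathbb{Z}^d$, remove $c$ from $C$; - otherwise (exchange step) choose an index $\ell$ with $x_\ell\notin\mathbb{Z}$, remove $c$ from $C$, add the current column $B_\ell$ to $C$, and replace the column $B_\ell$ by $c-\bigl(B_\ell\lfloor x_\ell\rceil+\sum_{j\neq\ell}B_j\lfloor x_j\rfloor\bigr)$. 3. Return $B$. *)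

(* Defs.v *)
From HB Require Import structures.
From mathcomp Require Import all_boot all_order all_algebra.
Set Implicit Arguments. Unset Strict Implicit. Unset Printing Implicit Defensive.
Import Order.TTheory GRing.Theory Num.Theory.
Local Open Scope ring_scope.

(* A state is a pair (B, C): the current d x d integer basis matrix B and the
   multiset C of remaining columns (represented as a seq; order irrelevant). *)

Definition gea_state (d : nat) := ('M[int]_d * seq 'cV[int]_d)%type.

Definition solx (d : nat) (B : 'M[int]_d) (c : 'cV[int]_d) : 'cV[rat]_d :=
  invmx (map_mx intr B) *m map_mx intr c.

Definition round_half (y : rat) : int := Num.floor (y + 2^-1).

Definition exch_col (d : nat) (B : 'M[int]_d) (c : 'cV[int]_d) (l : 'I_d)
  : 'cV[int]_d :=
  let x := solx B c in
  c - (round_half (x l 0) *: col l B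
       + \sum_(j < d | j != l) Num.floor (x j 0) *: col j B).

Definition replace_col (d : nat) (B : 'M[int]_d) (l : 'I_d) (v : 'cV[int]_d)
  : 'M[int]_d :=
  \matrix_(i, j) (if j == l then v i 0 else B i j).

Definition gea_step (d : nat) (s s' : gea_state d) (exch : bool) : Prop :=
  exists2 c, c \in s.2 &
    let x := solx s.1 c in
    ( [/\ (forall i, x i 0 \is a Num.int), s' = (s.1, rem c s.2) & exch = false ]
    \/ exists l : 'I_d,
        [/\ ~~ (x l 0 \is a Num.int),
            s' = (replace_col s.1 l (exch_col s.1 c l), col l s.1 :: rem c s.2)
          & exch = true ]).

Inductive gea_run (d : nat) : gea_state d -> seq bool -> gea_state d -> Prop :=
| gea_run_nil s : gea_run s [::] s
| gea_run_cons s s1 s2 b ls :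
    gea_step s s1 b -> gea_run s1 ls s2 -> gea_run s (b :: ls) s2.

Definition gea_init (d n : nat) (A : 'M[int]_(d, n)) (sel : 'I_d -> 'I_n)
  : gea_state d :=
  (\matrix_(i, j) A i (sel j),
   [seq col k A | k <- enum 'I_n & k \notin codom sel]).

(* Main.v *)
Require Import Defs.
From HB Require Import structures.
From mathcomp Require Import all_boot all_order all_algebra.
From mathcomp Require Import lra ring.
Import Order.TTheory GRing.Theory Num.Theory.
Local Open Scope ring_scope.
Set Implicit Arguments. Unset Strict Implicit.

Lemma round_bound (y : rat) : 2 * `|y - (round_half y)%:~R| <= 1.
Proof.
rewrite /round_half; have /andP[h1 h2] := floor_itv (y + 2^-1).
rewrite intrD in h2.
set r := (Num.floor _)%:~R in h1 h2 *.
rewrite -ler_pdivlMl // mulr1; rewrite ler_norml; apply/andP; split.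
- have: (2 : rat)^-1 = 1 - 2^-1 by rewrite {2}(splitr 1) mul1r addrK.
  move=> E. lra.
- lra.
Qed.

Lemma round_nonint (y : rat) : ~~ (y \is a Num.int) -> y - (round_half y)%:~R != 0.
Proof.
apply: contra; rewrite subr_eq0 => /eqP ->; exact: intr_int.
Qed.

Lemma det_repl1 d (l : 'I_d) (z : 'cV[rat]_d) :
  \det (\matrix_(i, j) (if j == l then z i 0 else (i == j)%:R)) = z l 0.
Proof.
rewrite (expand_det_row _ l) (bigD1 l) //= big1 ?addr0.
  rewrite !mxE eqxx /cofactor -[RHS]mulr1; congr (_ * _).
  rewrite -signr_odd addnn odd_double expr0 mul1r.
  have -> : row' l (col' l (\matrix_(i, j) (if j == l then z i 0 else (i == j)%:R))) = 1%:M.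
    apply/matrixP => i j; rewrite !mxE (inj_eq (@lift_inj _ l)) lift_eqF //.
  by rewrite det1.
move=> j hj; rewrite !mxE (negbTE hj) eq_sym (negbTE hj) mul0r //.
Qed.

Lemma det_exch d (B : 'M[int]_d) (c : 'cV[int]_d) (l : 'I_d) :
  \det B != 0 ->
  ((\det (replace_col B l (exch_col B c l)))%:~R : rat) =
  (\det B)%:~R * (solx B c l 0 - (round_half (solx B c l 0))%:~R).
Proof.
move=> hB.
set Bq := map_mx (intr : int -> rat) B.
have Bu : Bq \in unitmx.
  by rewrite unitmxE unitfE /Bq det_map_mx intr_eq0.
set x := solx B c.
have Bx : Bq *m x = map_mx intr c by rewrite /x /solx mulmxA mulmxV // mul1mx.
pose y : 'cV[rat]_d := \col_i (if i == l then (round_half (x l 0))%:~R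
                                else (Num.floor (x i 0))%:~R).
pose z := x - y.
pose M := \matrix_(i, j) (if j == l then z i 0 else (i == j)%:R) : 'M[rat]_d.
have hE : map_mx intr (exch_col B c l) = Bq *m z.
  rewrite /z mulmxBr Bx /exch_col -/x; clearbody x.
  apply/matrixP => i j; rewrite !mxE.
  rewrite (ord1 j) rmorphB /=; congr (_ - _).
  rewrite summxE rmorphD rmorph_sum /= [RHS](bigD1 l) //= /y !mxE eqxx.
  rewrite mulrC rmorphM /=; congr (_ + _).
  apply: eq_bigr => k hk; rewrite !mxE (negbTE hk) rmorphM /= mulrC //.
have hR : map_mx intr (replace_col B l (exch_col B c l)) = Bq *m M.
  apply/matrixP => i j; rewrite !mxE.
  case: eqP => [->|/eqP hj].
    have := congr1 (fun A : 'cV[rat]_d => A i 0) hE; rewrite !mxE => ->.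
    by apply: eq_bigr => k _; rewrite !mxE eqxx.
  rewrite (bigD1 j) //= big1 ?addr0; first by rewrite !mxE (negbTE hj) eqxx mulr1.
  move=> k hk; rewrite !mxE (negbTE hj) (negbTE hk) mulr0 //.
rewrite -det_map_mx /= hR det_mulmx det_map_mx det_repl1 /z !mxE eqxx //.
Qed.

Lemma step_true d (s s' : gea_state d) :
  \det s.1 != 0 -> gea_step s s' true ->
  \det s'.1 != 0 /\ 2 * `|\det s'.1| <= `|\det s.1|.
Proof.
move=> hB [c hc] /= [[_ _ //]|[l [hn -> _]]] /=.
have E := det_exch c l hB.
split.
  rewrite -(intr_eq0 rat) E mulf_eq0 negb_or intr_eq0 hB /=.
  exact: round_nonint.
rewrite -(ler_int rat) intrM !intr_norm E normrM mulrCA.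
rewrite -[X in _ <= X]mulr1 ler_wpM2l //; exact: round_bound.
Qed.

Lemma step_false d (s s' : gea_state d) :
  gea_step s s' false -> s'.1 = s.1.
Proof. by move=> [c hc] /= [[_ -> _]|[l [_ _ //]]]. Qed.

Lemma run_inv d (s s' : gea_state d) ls :
  gea_run s ls s' -> \det s.1 != 0 ->
  \det s'.1 != 0 /\ (2 ^+ count id ls)%:R * `|\det s'.1| <= `|\det s.1|.
Proof.
elim=> {s ls s'} [s|s s1 s2 b ls hst _ IH] hB.
  by rewrite /= expr0 mul1r.
case: b hst => /= hst.
  have [h1 h2] := step_true hB hst.
  have [h3 h4] := IH h1; split => //.
  rewrite add1n exprS natrM -mulrA.
  apply: le_trans h2; rewrite ler_wpM2l //.
have E := step_false hst; rewrite E in IH; have [h3 h4] := IH hB.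
by rewrite add0n.
Qed.

Theorem mainTheorem2 :
  (forall (d : nat) (s s' : gea_state d),
      \det s.1 != 0 -> gea_step s s' true ->
      2 * `|\det s'.1| <= `|\det s.1|)
  /\
  (forall (d n : nat) (A : 'M[int]_(d, n)) (sel : 'I_d -> 'I_n)
          (ls : seq bool) (s : gea_state d),
      \rank (map_mx (intr : int -> rat) A) = d ->
      injective sel ->
      row_free (map_mx (intr : int -> rat) (gea_init A sel).1)^T ->
      gea_run (gea_init A sel) ls s ->
      (2 ^+ count id ls)%:R <= `|\det (gea_init A sel).1|).
Proof.
split.
  by move=> d s s' hB hst; have [] := step_true hB hst.
move=> d n A sel ls s _ _ hf hr.
have hB : \det (gea_init A sel).1 != 0.
  move: hf; rewrite row_free_unit unitmxE unitfE det_tr det_map_mx.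
  by rewrite intr_eq0.
have [h1 h2] := run_inv hr hB.
apply: le_trans h2; rewrite -[X in X <= _]mulr1 ler_wpM2l //.
by rewrite -normr_gt0 in h1.
Qed.
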